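(* Let $P$ be a finite poset with an interval representation $\{[\ell(x),r(x)] : x\in P\}$ in which every interval has length $0$ or $1$ and no two elements are assigned the same interval. Let $Q$ be the subposet of elements assigned length-$1$ intervals, and partition $Q$ into antichains $A_1,\dots,A_t$ by successively removing minimal elements ($A_1$ the minimal elements of $Q$, $A_2$ the minimal elements of $Q\setminus A_1$, etc.). For $1\le i\le t$ let $p_i=\min\{r(x): x\in A_i\}$. Let $D_0$ be the set of length-$0$ elements $[c,c]$ with $c\le p_1$, $D_i$ (for $1\le i\le t-1$) those with $c\in(p_i,p_{i+1}]$, and $D_t$ those with $c>p_t$. Then: (a) a length-$1$ element belongs to $A_i$ if and only if its interval contains $p_i$; (b) every element of $A_{i+2}$ is greater in $P$ than every element of $D_i$, for $0\le i\le t-2$; (c) every element of $D_i$ is greater in $P$ than every element of $A_{i-1}$, for $2\le i\le t$; (d) every element of $A_j$ is greater in $P$ than every element of $A_i$ whenever $j\ge i+2$.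
   Context: Posets are finite and reflexive. An interval representation of a poset $P$ assigns to each element $x$ a closed bounded interval $[\ell(x), r(x)]$ (possibly degenerate) such that for distinct $x,y$, $x<y$ in $P$ if and only if $r(x)<\ell(y)$. *)

(* Defs.v *)
From mathcomp Require Import all_boot all_order all_algebra.
Set Implicit Arguments. Unset Strict Implicit. Unset Printing Implicit Defensive.
Import Order.TTheory GRing.Theory Num.Theory.
Local Open Scope ring_scope.

Definition is_partial_order (T : finType) (le : rel T) : Prop :=
  [/\ reflexive le, antisymmetric le & transitive le].

Definition plt (T : finType) (le : rel T) : rel T :=
  fun x y => (x != y) && le x y.

Definition interval_rep (R : realFieldType) (T : finType) (le : rel T)
    (l r : T -> R) : Prop :=
  (forall x, l x <= r x) /\
  (forall x y, x != y -> (plt le x y <-> r x < l y)).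

Definition minset_P (T : finType) (le : rel T) (S : {set T}) : {set T} :=
  [set x in S | [forall y in S, ~~ plt le y x]].

Definition Qset (R : realFieldType) (T : finType) (l r : T -> R) : {set T} :=
  [set x | r x - l x == 1].

(* peel n = Q minus A_1, ..., A_n *)
Fixpoint peel (R : realFieldType) (T : finType) (le : rel T) (l r : T -> R)
    (n : nat) : {set T} :=
  match n with
  | 0 => Qset l r
  | n'.+1 => peel le l r n' :\: minset_P le (peel le l r n')
  end.

Definition Alayer (R : realFieldType) (T : finType) (le : rel T) (l r : T -> R)
    (i : nat) : {set T} :=
  minset_P le (peel le l r i.-1).

Definition Dset (R : realFieldType) (T : finType) (l r : T -> R)
    (p : nat -> R) (t i : nat) : {set T} :=
  [set x | (r x == l x) &&
     (if i == 0%N then l x <= p 1%N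
      else if (i < t)%N then (p i < l x) && (l x <= p i.+1)
      else if i == t then p t < l x
      else false)].

(* Main.v *)
Require Import Defs.
From mathcomp Require Import all_boot all_order all_algebra.
From mathcomp Require Import zify lra.
Import Order.TTheory GRing.Theory Num.Theory.
Local Open Scope ring_scope.
Set Implicit Arguments. Unset Strict Implicit.

Lemma exmin (T:finType) (R:realDomainType) (f:T->R) (S:{set T}) :
  S != set0 -> exists2 z, z \in S & forall y, y \in S -> f z <= f y.
Proof.
case/set0Pn=> x0 Hx0.
case: (@arg_minP _ R T x0 (mem S) f Hx0) => z Hz Hmin.
by exists z.
Qed.

Lemma minset_char (R : realFieldType) (T : finType) (le : rel T) (l r : T -> R)
  (S : {set T}) (z : T) :
  interval_rep le l r ->
  (forall x, x \in S -> r x = l x + 1) ->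
  z \in S -> (forall y, y \in S -> l z <= l y) ->
  forall x, (x \in minset_P le S) = (x \in S) && (l x <= l z + 1).
Proof.
move=> [_ rep] HS zS zmin x.
rewrite inE; case xS: (x \in S) => //=.
apply/forallP/idP.
- move=> H; have := H z; rewrite zS /=.
  case: (eqVneq z x) => [->|zx]; first by rewrite lerDl ler01.
  move/negP=> H1; rewrite leNgt; apply/negP=> Hlt; apply: H1.
  by apply/(rep z x zx); rewrite (HS z zS).
- move=> Hx y; apply/implyP=> yS; apply/negP.
  case: (eqVneq y x) => [->|yx]; first by rewrite /plt eqxx.
  move/(rep y x yx); rewrite (HS y yS) ltNge; apply/negP/negPn.
  apply: le_trans Hx _; by rewrite lerD2r zmin.
Qed.

Lemma peel_sub (R : realFieldType) (T : finType) (le : rel T) (l r : T -> R) k :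
  peel le l r k \subset Qset l r.
Proof.
elim: k => [|k IH] /=; first exact: subxx.
exact: subset_trans (subsetDl _ _) IH.
Qed.

Unset Implicit Arguments.
Theorem mainTheorem8 (R : realFieldType) (T : finType) (le : rel T)
    (l r : T -> R) (t : nat) (p : nat -> R) :
  is_partial_order le ->
  interval_rep le l r ->
  (forall x, r x - l x = 0 \/ r x - l x = 1) ->
  (forall x y, l x = l y -> r x = r y -> x = y) ->
  (* t = number of antichains: A_1, ..., A_t nonempty, A_{t+1} empty *)
  (forall i, (0 < i <= t)%N -> Alayer le l r i != set0) ->
  Alayer le l r t.+1 = set0 ->
  (* p_i = min { r x : x in A_i } *)
  (forall i, (0 < i <= t)%N ->
     (exists2 x, x \in Alayer le l r i & r x = p i) /\
     (forall x, x \in Alayer le l r i -> p i <= r x)) ->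
  (* (a) *)
  (forall i x, (0 < i <= t)%N -> r x - l x = 1 ->
     (x \in Alayer le l r i <-> l x <= p i <= r x)) /\
  (* (b) *)
  (forall i x y, (i.+2 <= t)%N -> x \in Dset l r p t i ->
     y \in Alayer le l r i.+2 -> plt le x y) /\
  (* (c) *)
  (forall i x y, (2 <= i <= t)%N -> x \in Alayer le l r i.-1 ->
     y \in Dset l r p t i -> plt le x y) /\
  (* (d) *)
  (forall i j x y, (0 < i)%N -> (i.+2 <= j <= t)%N ->
     x \in Alayer le l r i -> y \in Alayer le l r j -> plt le x y).
Proof.
move=> _ rep _ _ Hne _ Hp.
have Qr : forall x, x \in Qset l r -> r x = l x + 1.
  by move=> x; rewrite inE subr_eq addrC => /eqP.
have Pr : forall k x, x \in peel le l r k -> r x = l x + 1.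
  by move=> k x /(subsetP (peel_sub le l r k)); apply: Qr.
have L1 : forall i, (0 < i <= t)%N ->
   (exists2 z, z \in peel le l r i.-1 & l z + 1 = p i) /\
   Alayer le l r i = [set x in peel le l r i.-1 | l x <= p i].
  move=> i Hi.
  have Sne : peel le l r i.-1 != set0.
    apply: contra (Hne i Hi) => /eqP E; apply/eqP/setP=> x.
    by rewrite /Alayer E !inE.
  case: (exmin l Sne) => z zS zmin.
  have MC := minset_char rep (Pr i.-1) zS zmin.
  have E : p i = l z + 1.
    case: (Hp i Hi) => [[x0 Hx0 Hrx0] Hall].
    apply/eqP; rewrite eq_le; apply/andP; split.
      by rewrite -(Pr _ _ zS) Hall // /Alayer MC zS lerDl ler01.
    move: Hx0; rewrite /Alayer MC => /andP[x0S _].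
    by rewrite -Hrx0 (Pr _ _ x0S) lerD2r zmin.
  split; first by exists z.
  by apply/setP=> x; rewrite /Alayer MC inE E.
have Inv : forall k, (k <= t)%N ->
    peel le l r k = [set x in Qset l r | (k == 0%N) || (p k < l x)].
  elim=> [|k IH] Hk.
    by apply/setP=> x; rewrite /= !inE andbT.
  have [[z zS Hz] HA] := L1 k.+1 Hk.
  have IH' := IH (ltnW Hk).
  have Hlt : (k != 0%N) -> p k < p k.+1.
    move=> k0; move: zS; rewrite IH' inE (negbTE k0) /= => /andP[_ H].
    by rewrite -Hz (lt_le_trans H) // lerDl ler01.
  rewrite /= -/(Alayer le l r k.+1) HA IH'.
  apply/setP=> x; rewrite !inE /=.
  case: (r x - l x == 1) => //=.
  case: (eqVneq k 0%N) => [->|k0] /=; first by rewrite andbT ltNge.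
  case: (ltP (p k) (l x)) => Hx /=; first by rewrite andbT ltNge.
  apply/esym/negbTE; rewrite -leNgt; exact: le_trans Hx (ltW (Hlt k0)).
have Inc : forall k, (0 < k)%N -> (k.+1 <= t)%N -> p k + 1 < p k.+1.
  move=> k k0 Hk; have [[z zS Hz] _] := L1 k.+1 Hk.
  have k0' : (k == 0%N) = false by lia.
  move: zS; rewrite /= (Inv k (ltnW Hk)) inE k0' /= => /andP[_ H].
  by rewrite -Hz ltrD2r.
have Mono : forall i j, (0 < i)%N -> (i <= j)%N -> (j <= t)%N -> p i <= p j.
  move=> i j i0; elim: j => [|j IH] Hij Hj; first lia.
  case: (eqVneq i j.+1) => [->//|ne].
  have Hij' : (i <= j)%N by lia.
  apply: le_trans (IH Hij' (ltnW Hj)) _.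
  have := Inc j ltac:(lia) Hj; lra.
have Lay : forall i x, (0 < i <= t)%N -> x \in Alayer le l r i ->
    [/\ r x = l x + 1, (i == 1%N) || (p i.-1 < l x), l x <= p i & p i <= r x].
  move=> i x Hi Hx; have [_ HA] := L1 i Hi.
  have Hpr := (Hp i Hi).2 x Hx.
  move: Hx; rewrite HA inE => /andP[xS Hle].
  have Hr := Pr _ _ xS.
  split=> //.
  case: i Hi HA xS Hle Hpr => [//|i] Hi HA xS Hle Hpr /=.
  move: xS; rewrite (Inv i ltac:(lia)) inE => /andP[_]; by [].
have Neq : forall x y, r x = l x -> r y = l y + 1 -> x != y.
  move=> x y H1 H2; apply/eqP=> E; subst y; move: H1 H2 => H1 H2; lra.
split; [|split; [|split]].
- move=> i x Hi Hx.
  have Hx' : x \in Qset l r by rewrite inE Hx.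
  have Hr := Qr x Hx'.
  split.
    by move/(Lay i x Hi) => [_ _ ? ?]; apply/andP.
  move=> /andP[H1 H2]; have [_ HA] := L1 i Hi; rewrite HA inE H1 andbT.
  case: i Hi HA H1 H2 => [//|i] Hi HA H1 H2 /=.
  rewrite (Inv i ltac:(lia)) inE Hx' /=.
  case: (eqVneq i 0%N) => //= i0.
  have := Inc i ltac:(lia) ltac:(lia); lra.
- move=> i x y Hi; rewrite inE => /andP[/eqP Hrx Hc] Hy.
  have [Hry Hly _ _] := Lay i.+2 y ltac:(lia) Hy.
  move: Hly => /= Hly.
  have Hcx : l x <= p i.+1.
    move: Hc; case: (eqVneq i 0%N) => [->//|i0] /=.
    by rewrite (_ : (i < t)%N = true); [case/andP|lia].
  apply/(rep.2 x y (Neq x y Hrx Hry)); lra.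
- move=> i x y /andP[Hi2 Hit] Hx; rewrite inE => /andP[/eqP Hry Hc].
  case: i Hi2 Hit Hx Hc => [//|[//|i]] Hi2 Hit Hx Hc.
  have [Hrx _ Hlx _] := Lay i.+1 x ltac:(lia) Hx.
  have Hly : p i.+2 < l y.
    move: Hc => /=; case: ifP => _; first by case/andP.
    by case: eqP => // <-.
  have := Inc i.+1 ltac:(lia) Hit.
  move=> Hinc.
  have xy : x != y by rewrite eq_sym; apply: Neq.
  apply/(rep.2 x y xy); lra.
- move=> i j x y i0 /andP[Hij Hjt] Hx Hy.
  have [Hrx _ Hlx _] := Lay i x ltac:(lia) Hx.
  case: j Hij Hjt Hy => [//|j] Hij Hjt Hy.
  have [Hry Hly _ _] := Lay j.+1 y ltac:(lia) Hy.
  have j0 : (j.+1 == 1%N) = false by lia.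
  move: Hly; rewrite j0 /= => Hly.
  have H1 := Inc i i0 ltac:(lia).
  have H2 := Mono i.+1 j ltac:(lia) ltac:(lia) ltac:(lia).
  have xy : x != y.
    apply/eqP=> E; subst y; lra.
  apply/(rep.2 x y xy); lra.
Qed.
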